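(* For all integers $t\ge0$ and $k\ge1$, \[m(2^{k+2}t+2^{k+1}-2)\ge m(t)+\frac{k}{2^k}.\]
   Context: $s(n)$ is the number of $1$s in the binary expansion of $n\ge0$; $\delta(j,t)=\lim_{N\to\infty}\frac1N|\{0\le n<N: s(n+t)-s(n)=j\}|$ for $j\in\mathbb Z$, a probability distribution on $\mathbb Z$, and $\kappa_j(t)$ denotes its $j$-th cumulant ($\log\sum_k\delta(k,t)e^{2\pi ik\vartheta}=\sum_{j\ge0}\frac{\kappa_j(t)}{j!}(2\pi i\vartheta)^j$ near $\vartheta=0$). Set $D(t)=\kappa_2(t)-\kappa_3(t)/3$ and $m(t)=\min\bigl(D(t),D(t+1)\bigr)$. *)

(* Defs.v *)
From Stdlib Require Import Reals ZArith List Lia Lra.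
From Coquelicot Require Import Coquelicot.
Open Scope R_scope.

Fixpoint pos_popcount (p : positive) : nat :=
  match p with
  | xH => 1%nat
  | xO q => pos_popcount q
  | xI q => S (pos_popcount q)
  end.

Definition s (n : nat) : nat :=
  match N.of_nat n with
  | N0 => 0%nat
  | Npos p => pos_popcount p
  end.

Definition count_diff (j : Z) (t N : nat) : nat :=
  length (filter (fun n => Z.eqb (Z.of_nat (s (n + t)) - Z.of_nat (s n)) j)
                 (seq 0 N)).

Definition delta (j : Z) (t : nat) : R :=
  real (Lim_seq (fun N => INR (count_diff j t N) / INR N)).

(* r-th moment of the distribution delta(.,t) on Z:
   sum_{j in Z} delta(j,t) j^r, as the limit of symmetric partial sums *)
Definition moment (r : nat) (t : nat) : R :=
  real (Lim_seq (fun M =>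
    sum_f_R0 (fun i => delta (Z.of_nat i - Z.of_nat M) t
                        * (IZR (Z.of_nat i - Z.of_nat M)) ^ r) (2 * M))).

(* cumulants kappa_2, kappa_3 of delta(.,t), expressed through the moments
   (coefficients of the log-characteristic function expansion):
   kappa_2 = m2 - m1^2,  kappa_3 = m3 - 3 m2 m1 + 2 m1^3 *)
Definition kappa2 (t : nat) : R := moment 2 t - (moment 1 t) ^ 2.
Definition kappa3 (t : nat) : R :=
  moment 3 t - 3 * moment 2 t * moment 1 t + 2 * (moment 1 t) ^ 3.

Definition D (t : nat) : R := kappa2 t - kappa3 t / 3.
Definition m (t : nat) : R := Rmin (D t) (D (S t)).

(* Main.v *)
Require Import Defs.
From Stdlib Require Import Reals ZArith NArith List Lia Lra.
From Coquelicot Require Import Coquelicot.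
Require Import Defs.
Open Scope R_scope.

Lemma s_double n : s (2 * n) = s n.
Proof.
  unfold s. rewrite Nat2N.inj_mul. destruct (N.of_nat n); reflexivity.
Qed.

Lemma s_double1 n : s (2 * n + 1) = S (s n).
Proof.
  unfold s. rewrite Nat2N.inj_add, Nat2N.inj_mul. destruct (N.of_nat n); reflexivity.
Qed.

Lemma s_0 : s 0 = 0%nat.
Proof. reflexivity. Qed.

Lemma s_succ_le n : (s (S n) <= S (s n))%nat.
Proof.
  induction n as [n IH] using lt_wf_ind.
  destruct (Nat.Even_or_Odd n) as [[k Hk]|[k Hk]]; subst n.
  - replace (S (2*k)) with (2*k+1)%nat by lia. rewrite s_double1, s_double. lia.
  - replace (S (2*k+1)) with (2*(S k))%nat by lia. rewrite s_double, s_double1.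
    pose proof (IH k ltac:(lia)); lia.
Qed.

Lemma s_add_le n t : (s (n + t) <= s n + t)%nat.
Proof.
  induction t. rewrite Nat.add_0_r; lia.
  replace (n + S t)%nat with (S (n+t)) by lia. pose proof (s_succ_le (n+t)). lia.
Qed.
Definition Pd (j : Z) (t n : nat) : bool :=
  Z.eqb (Z.of_nat (s (n + t)) - Z.of_nat (s n)) j.

Lemma cnt_0 j t : count_diff j t 0 = 0%nat.
Proof. reflexivity. Qed.

Lemma cnt_S j t N : count_diff j t (S N) = (count_diff j t N + if Pd j t N then 1 else 0)%nat.
Proof.
  unfold count_diff. rewrite seq_S, filter_app, length_app. simpl.
  unfold Pd. destruct (Z.eqb _ j); simpl; lia.
Qed.

Lemma cnt_le j t N : (count_diff j t N <= N)%nat.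
Proof. induction N. rewrite cnt_0; lia. rewrite cnt_S. destruct (Pd j t N); lia. Qed.

Lemma cnt_mono j t a b : (count_diff j t a <= count_diff j t (a + b) <= count_diff j t a + b)%nat.
Proof.
  induction b. rewrite Nat.add_0_r; lia.
  replace (a + S b)%nat with (S (a+b)) by lia. rewrite cnt_S. destruct (Pd j t (a+b)); lia.
Qed.

Lemma cnt_even j t N : count_diff j (2*t) (2*N) = (2 * count_diff j t N)%nat.
Proof.
  induction N. reflexivity.
  replace (2 * S N)%nat with (S (S (2*N))) by lia. rewrite !cnt_S, IHN.
  unfold Pd.
  replace (S (2 * N) + 2 * t)%nat with (2 * (N+t) + 1)%nat by lia.
  replace (S (2 * N)) with (2 * N + 1)%nat by lia.
  replace (2 * N + 2 * t)%nat with (2 * (N+t))%nat by lia.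
  rewrite !s_double1, !s_double.
  replace (Z.of_nat (S (s (N + t))) - Z.of_nat (S (s N)))%Z with
    (Z.of_nat (s (N + t)) - Z.of_nat (s N))%Z by lia.
  destruct (Z.eqb _ j); lia.
Qed.

Lemma cnt_odd j t N : count_diff j (2*t+1) (2*N) =
  (count_diff (j-1) t N + count_diff (j+1) (t+1) N)%nat.
Proof.
  induction N. reflexivity.
  replace (2 * S N)%nat with (S (S (2*N))) by lia. rewrite !cnt_S, IHN.
  unfold Pd.
  replace (S (2 * N) + (2 * t + 1))%nat with (2 * (N+(t+1)))%nat by lia.
  replace (S (2 * N)) with (2 * N + 1)%nat by lia.
  replace (2 * N + (2 * t + 1))%nat with (2 * (N+t) + 1)%nat by lia.
  rewrite !s_double1, !s_double.
  repeat match goal with |- context [Z.eqb ?a ?b] => destruct (Z.eqb_spec a b) end;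
  cbv beta iota; lia.
Qed.

Lemma cnt_t0 j N : count_diff j 0 N = if Z.eqb j 0 then N else 0%nat.
Proof.
  induction N. destruct (Z.eqb j 0); reflexivity.
  rewrite cnt_S, IHN. unfold Pd. rewrite Nat.add_0_r, Z.sub_diag.
  repeat match goal with |- context [Z.eqb ?a ?b] => destruct (Z.eqb_spec a b) end;
  cbv beta iota; lia.
Qed.

Lemma cnt_big j t N : (Z.of_nat t < j)%Z -> count_diff j t N = 0%nat.
Proof.
  intros H. induction N. reflexivity.
  rewrite cnt_S, IHN. unfold Pd. pose proof (s_add_le N t).
  repeat match goal with |- context [Z.eqb ?a ?b] => destruct (Z.eqb_spec a b) end;
  cbv beta iota; lia.
Qed.

Lemma cnt_t1 i q : count_diff (1 - Z.of_nat i) 1 (2^(i+1) * q) = q.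
Proof.
  revert q. induction i; intro q.
  - change (2^(0+1) * q)%nat with (2 * q)%nat. change (1 - Z.of_nat 0)%Z with 1%Z.
    pose proof (cnt_odd 1 0 q) as H. change (2*0+1)%nat with 1%nat in H. rewrite H.
    rewrite cnt_t0, (cnt_big (1+1)) by lia. simpl. lia.
  - replace (2 ^ (S i + 1) * q)%nat with (2 * (2^(i+1) * q))%nat
      by (rewrite !Nat.pow_add_r; simpl; lia).
    pose proof (cnt_odd (1 - Z.of_nat (S i)) 0 (2^(i+1)*q)) as H. simpl (2*0+1)%nat in H. rewrite H.
    rewrite cnt_t0. replace (1 - Z.of_nat (S i) + 1)%Z with (1 - Z.of_nat i)%Z by lia.
    rewrite IHi.
    repeat match goal with |- context [Z.eqb ?a ?b] => destruct (Z.eqb_spec a b) end;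
    cbv beta iota; lia.
Qed.
Definition rat (j : Z) (t N : nat) : R := INR (count_diff j t N) / INR N.

Lemma ratio_bound a b m N K : 0 < m -> m <= N -> N - m <= K -> 0 <= b <= m ->
  0 <= a - b <= N - m -> Rabs (a / N - b / m) <= K / N.
Proof.
  intros Hm HmN HK Hb Hab.
  assert (HN : 0 < N) by lra.
  replace (a / N - b / m) with ((a * m - b * N) / (N * m)) by (field; lra).
  rewrite Rabs_div by nra. rewrite (Rabs_right (N*m)) by nra.
  assert (Rabs (a * m - b * N) <= m * K).
  { apply Rabs_le. split; nra. }
  apply Rle_div_l. nra.
  replace (K / N * (N * m)) with (m * K) by (field; lra). lra.
Qed.

Lemma K_lemma (c : nat -> nat) (K : nat) (L : R) :
  (forall a b, c a <= c (a + b) <= c a + b)%nat -> (forall a, c a <= a)%nat -> (1 <= K)%nat ->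
  is_lim_seq (fun q => INR (c (K * q)%nat) / INR (K * q)) L ->
  is_lim_seq (fun N => INR (c N) / INR N) L.
Proof.
  intros Hmono Hle HK Hlim.
  apply is_lim_seq_Reals in Hlim. apply is_lim_seq_Reals.
  intros eps Heps.
  destruct (Hlim (eps/2)) as [Q HQ]; [lra|].
  destruct (nfloor_ex (2 * INR K / eps)) as [N1 HN1].
  { apply Rmult_le_pos; [|left; apply Rinv_0_lt_compat; lra]. pose proof (pos_INR K); lra. }
  exists (Nat.max (K * (Q + 1)) (N1 + 1)). intros N HN.
  assert (HKn : K <> 0%nat) by lia.
  set (q := (N / K)%nat).
  assert (Hq : (Q + 1 <= q)%nat) by (apply Nat.div_le_lower_bound; lia).
  pose proof (Nat.div_mod N K HKn) as Hdm. pose proof (Nat.mod_upper_bound N K HKn).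
  fold q in Hdm.
  specialize (HQ q ltac:(lia)). unfold R_dist in *.
  assert (HKq : (1 <= K * q)%nat) by nia.
  assert (Hb := ratio_bound (INR (c N)) (INR (c (K*q)%nat)) (INR (K*q)) (INR N) (INR K)).
  assert (HNK : INR K / INR N < eps / 2).
  { assert (HN2 : INR N >= INR (N1 + 1)) by (apply Rle_ge, le_INR; lia).
    rewrite plus_INR in HN2. simpl in HN2.
    assert (HN3 : 0 < INR N) by (pose proof (pos_INR N1); lra).
    apply Rlt_div_l. lra.
    assert (E1 : 2 * INR K / eps * eps = 2 * INR K) by (field; lra).
    assert (E2 : 2 * INR K / eps < INR N) by lra.
    apply (Rmult_lt_compat_r eps) in E2; [|lra]. nra. }
  assert (Rabs (INR (c N) / INR N - INR (c (K * q)%nat) / INR (K * q)) <= INR K / INR N).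
  { pose proof (Hmono (K*q)%nat (N mod K)) as HM. rewrite <- Hdm in HM.
    apply Hb.
    - apply lt_0_INR. lia.
    - apply le_INR. lia.
    - rewrite <- minus_INR by lia. apply le_INR. lia.
    - split. apply pos_INR. apply le_INR, Hle.
    - rewrite <- !minus_INR by lia. split. apply pos_INR. apply le_INR.
      lia. }
  pose proof (Rabs_triang (INR (c N) / INR N - INR (c (K * q)%nat) / INR (K * q))
      (INR (c (K * q)%nat) / INR (K * q) - L)).
  replace (INR (c N) / INR N - INR (c (K * q)%nat) / INR (K * q) +
        (INR (c (K * q)%nat) / INR (K * q) - L)) with (INR (c N) / INR N - L) in H1 by ring.
  lra.
Qed.
Lemma lim_scal (u : nat -> R) (a l : R) : is_lim_seq u l -> is_lim_seq (fun n => a * u n) (a * l).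
Proof. intros H. exact (is_lim_seq_scal_l u a l H). Qed.

Lemma div2x (x y : R) : (2 * x) / (2 * y) = x / y.
Proof.
  destruct (Req_dec y 0) as [->|Hy].
  - rewrite Rmult_0_r. unfold Rdiv. rewrite Rinv_0. ring.
  - field. auto.
Qed.

Lemma rat_even j t q : rat j (2*t) (2*q) = rat j t q.
Proof.
  unfold rat. rewrite cnt_even, !mult_INR. apply div2x.
Qed.

Lemma rat_odd j t q : rat j (2*t+1) (2*q) = /2 * rat (j-1) t q + /2 * rat (j+1) (t+1) q.
Proof.
  unfold rat. rewrite cnt_odd, plus_INR, mult_INR. simpl (INR 2).
  destruct (Req_dec (INR q) 0) as [Hq|Hq].
  - rewrite Hq, Rmult_0_r. unfold Rdiv. rewrite Rinv_0. ring.
  - field. auto.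
Qed.

Lemma rat_bounds j t N : 0 <= rat j t N <= 1.
Proof.
  unfold rat. destruct N. simpl. unfold Rdiv. rewrite Rinv_0. lra.
  pose proof (cnt_le j t (S N)). pose proof (lt_0_INR (S N) ltac:(lia)).
  split. apply Rmult_le_pos. apply pos_INR. left; apply Rinv_0_lt_compat; lra.
  apply Rle_div_l. lra. rewrite Rmult_1_l. apply le_INR; auto.
Qed.

Lemma rat_K j t K (L : R) : (1 <= K)%nat ->
  is_lim_seq (fun q => rat j t (K * q)) L -> is_lim_seq (rat j t) L.
Proof.
  intros HK H. apply (K_lemma (count_diff j t) K L); auto.
  apply cnt_mono. apply cnt_le.
Qed.

Lemma sub2 (u : nat -> R) l : is_lim_seq u l -> is_lim_seq (fun q => u (2 * q)%nat) l.
Proof.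
  intros H. apply (is_lim_seq_subseq u l (fun q => (2*q)%nat)); auto.
  apply eventually_subseq. intros; lia.
Qed.

Lemma rat_lim_ex t : forall j, exists l : R, is_lim_seq (rat j t) l.
Proof.
  induction t as [t IH] using lt_wf_ind. intro j.
  destruct t as [|[|t]].
  -
    destruct (Z.eqb_spec j 0) as [->|Hj].
    + exists 1. apply is_lim_seq_ext_loc with (fun _ => 1); [|apply is_lim_seq_const].
      exists 1%nat. intros N HN. unfold rat. rewrite cnt_t0. simpl.
      field. apply not_0_INR. lia.
    + exists 0. apply is_lim_seq_ext with (fun _ => 0); [|apply is_lim_seq_const].
      intros N. unfold rat. rewrite cnt_t0. destruct (Z.eqb_spec j 0); [lia|].
      simpl. unfold Rdiv. ring.
  -
    destruct (Z_lt_le_dec 1 j) as [Hj|Hj].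
    + exists 0. apply is_lim_seq_ext with (fun _ => 0); [|apply is_lim_seq_const].
      intros N. unfold rat. rewrite cnt_big by lia. simpl. unfold Rdiv. ring.
    + set (i := Z.to_nat (1 - j)).
      assert (Hji : j = (1 - Z.of_nat i)%Z) by (unfold i; lia).
      exists (/ INR (2^(i+1))). apply (rat_K j 1 (2^(i+1))).
      { pose proof (Nat.pow_nonzero 2 (i+1)). lia. }
      apply is_lim_seq_ext_loc with (fun _ => / INR (2^(i+1))); [|apply is_lim_seq_const].
      exists 1%nat. intros q Hq. unfold rat. rewrite Hji, cnt_t1, mult_INR.
      field. split. apply not_0_INR; lia. apply not_0_INR. apply Nat.pow_nonzero. lia.
  - destruct (Nat.Even_or_Odd (S (S t))) as [[u Hu]|[u Hu]]; rewrite Hu.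
    + destruct (IH u ltac:(lia) j) as [l Hl]. exists l.
      apply (rat_K j (2*u) 2 l). lia.
      apply is_lim_seq_ext with (rat j u); auto. intros q; symmetry; apply rat_even.
    + destruct (IH u ltac:(lia) (j-1)%Z) as [l1 Hl1].
      destruct (IH (u+1)%nat ltac:(lia) (j+1)%Z) as [l2 Hl2].
      exists (/2 * l1 + /2 * l2).
      apply (rat_K j (2*u+1) 2). lia.
      apply is_lim_seq_ext with (fun q => /2 * rat (j-1) u q + /2 * rat (j+1) (u+1) q).
      intros q; symmetry; apply rat_odd.
      apply is_lim_seq_plus'; apply lim_scal; auto.
Qed.

Lemma delta_lim j t : is_lim_seq (rat j t) (delta j t).
Proof.
  destruct (rat_lim_ex t j) as [l Hl].
  unfold delta. fold (rat j t). rewrite (is_lim_seq_unique _ _ Hl). simpl. exact Hl.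
Qed.

Lemma delta_even j u : delta j (2*u) = delta j u.
Proof.
  pose proof (sub2 _ _ (delta_lim j (2*u))) as H.
  apply is_lim_seq_unique in H.
  rewrite (Lim_seq_ext _ (rat j u)) in H by (intros; apply rat_even).
  rewrite (is_lim_seq_unique _ _ (delta_lim j u)) in H. congruence.
Qed.

Lemma delta_odd j u : delta j (2*u+1) = /2 * delta (j-1) u + /2 * delta (j+1) (u+1).
Proof.
  pose proof (sub2 _ _ (delta_lim j (2*u+1))) as H.
  assert (H2 : is_lim_seq (fun q => /2 * rat (j-1) u q + /2 * rat (j+1) (u+1) q)
                 (/2 * delta (j-1) u + /2 * delta (j+1) (u+1))).
  { apply is_lim_seq_plus'; apply lim_scal; apply delta_lim. }
  apply is_lim_seq_unique in H. apply is_lim_seq_unique in H2.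
  rewrite (Lim_seq_ext _ (fun q => /2 * rat (j-1) u q + /2 * rat (j+1) (u+1) q)) in H
    by (intros; apply rat_odd).
  congruence.
Qed.

Lemma delta_bounds j t : 0 <= delta j t <= 1.
Proof.
  pose proof (delta_lim j t) as H. split.
  - apply (is_lim_seq_le (fun _ => 0) (rat j t) 0 (delta j t)); auto.
    intros; apply rat_bounds. apply is_lim_seq_const.
  - apply (is_lim_seq_le (rat j t) (fun _ => 1) (delta j t) 1); auto.
    intros; apply rat_bounds. apply is_lim_seq_const.
Qed.

Lemma delta_big j t : (Z.of_nat t < j)%Z -> delta j t = 0.
Proof.
  intros Hj. pose proof (delta_lim j t) as H.
  apply is_lim_seq_unique in H.
  rewrite (Lim_seq_ext _ (fun _ => 0)) in H.
  rewrite Lim_seq_const in H. congruence.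
  intros N. unfold rat. rewrite cnt_big by auto. simpl. unfold Rdiv. ring.
Qed.

Lemma lim_uniq (u : nat -> R) (a b : R) : is_lim_seq u a -> is_lim_seq u b -> a = b.
Proof.
  intros Ha Hb. apply is_lim_seq_unique in Ha. apply is_lim_seq_unique in Hb.
  rewrite Ha in Hb. injection Hb; auto.
Qed.

Lemma delta_t0 j : delta j 0 = if Z.eqb j 0 then 1 else 0.
Proof.
  apply (lim_uniq (rat j 0)). apply delta_lim.
  destruct (Z.eqb_spec j 0) as [->|Hj].
  + apply is_lim_seq_ext_loc with (fun _ => 1); [|apply is_lim_seq_const].
    exists 1%nat. intros N HN. unfold rat. rewrite cnt_t0. simpl.
    field. apply not_0_INR. lia.
  + apply is_lim_seq_ext with (fun _ => 0); [|apply is_lim_seq_const].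
    intros N. unfold rat. rewrite cnt_t0. destruct (Z.eqb_spec j 0); [lia|].
    simpl. unfold Rdiv. ring.
Qed.

Lemma delta_t1 i : delta (1 - Z.of_nat i) 1 = / 2 ^ (i+1).
Proof.
  apply (lim_uniq (rat (1 - Z.of_nat i) 1)). apply delta_lim.
  replace (2 ^ (i+1)) with (INR (2^(i+1))) by (rewrite pow_INR; reflexivity).
  apply (rat_K _ 1 (2^(i+1))).
  { pose proof (Nat.pow_nonzero 2 (i+1)). lia. }
  apply is_lim_seq_ext_loc with (fun _ => / INR (2^(i+1))).
  2:{ apply is_lim_seq_const. }
  exists 1%nat. intros q Hq. unfold rat. rewrite cnt_t1, mult_INR.
  field. split. apply not_0_INR; lia. apply not_0_INR. apply Nat.pow_nonzero. lia.
Qed.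
Definition Sym (g : Z -> R) (M : nat) : R :=
  sum_f_R0 (fun i => g (Z.of_nat i - Z.of_nat M)%Z) (2 * M).

Lemma Sym_0 g : Sym g 0 = g 0%Z.
Proof. reflexivity. Qed.

Lemma Sym_S g M : Sym g (S M) = Sym g M + g (-(Z.of_nat M + 1))%Z + g (Z.of_nat M + 1)%Z.
Proof.
  unfold Sym. replace (2 * S M)%nat with (S (S (2 * M))) by lia.
  rewrite decomp_sum by lia. cbn [Nat.pred]. rewrite tech5.
  rewrite (sum_eq (fun i => g (Z.of_nat (S i) - Z.of_nat (S M))%Z)
                  (fun i => g (Z.of_nat i - Z.of_nat M)%Z)).
  2:{ intros i _. f_equal. lia. }
  replace (Z.of_nat 0 - Z.of_nat (S M))%Z with (-(Z.of_nat M + 1))%Z by lia.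
  replace (Z.of_nat (S (S (2 * M))) - Z.of_nat (S M))%Z with (Z.of_nat M + 1)%Z by lia.
  ring.
Qed.

Lemma Sym_ext g g' M : (forall j, g j = g' j) -> Sym g M = Sym g' M.
Proof. intros H. unfold Sym. apply sum_eq. intros; apply H. Qed.

Lemma Sym_plus g g' M : Sym (fun j => g j + g' j) M = Sym g M + Sym g' M.
Proof. induction M. reflexivity. rewrite !Sym_S, IHM. ring. Qed.

Lemma Sym_scal a g M : Sym (fun j => a * g j) M = a * Sym g M.
Proof. induction M. reflexivity. rewrite !Sym_S, IHM. ring. Qed.

Lemma Sym_shift_m1 F M :
  Sym (fun j => F (j - 1)%Z) M = Sym F M + F (-(Z.of_nat M + 1))%Z - F (Z.of_nat M).
Proof.
  induction M.
  - rewrite !Sym_0. simpl. ring.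
  - rewrite !Sym_S, IHM. rewrite Nat2Z.inj_succ. unfold Z.succ.
    replace (-(Z.of_nat M + 1) - 1)%Z with (-(Z.of_nat M + 1 + 1))%Z by lia.
    replace (Z.of_nat M + 1 - 1)%Z with (Z.of_nat M) by lia. ring.
Qed.

Lemma Sym_shift_p1 F M :
  Sym (fun j => F (j + 1)%Z) M = Sym F M - F (-(Z.of_nat M))%Z + F (Z.of_nat M + 1)%Z.
Proof.
  induction M.
  - rewrite !Sym_0. simpl. ring.
  - rewrite !Sym_S, IHM. rewrite Nat2Z.inj_succ. unfold Z.succ.
    replace (-(Z.of_nat M + 1) + 1)%Z with (-(Z.of_nat M))%Z by lia. ring.
Qed.

Definition hfun (g : Z -> R) (n : nat) : R :=
  match n with
  | O => g 0%Z
  | S n' => g (-(Z.of_nat n' + 1))%Z + g (Z.of_nat n' + 1)%Z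
  end.

Lemma Sym_sum g M : Sym g M = sum_f_R0 (hfun g) M.
Proof. induction M. reflexivity. rewrite Sym_S, tech5, IHM. simpl. ring. Qed.
Definition Ef (n : nat) : R := (INR n ^ 3 + 1) / 2 ^ n.

Lemma Ef_nonneg n : 0 <= Ef n.
Proof.
  unfold Ef. apply Rmult_le_pos. pose proof (pos_INR n). nra.
  left. apply Rinv_0_lt_compat, pow_lt. lra.
Qed.

Lemma Ef_sum M : sum_f_R0 Ef M = 28 - (INR M ^ 3 + 6 * INR M ^ 2 + 18 * INR M + 27) / 2 ^ M.
Proof.
  induction M.
  - unfold Ef. simpl. field.
  - rewrite tech5, IHM. unfold Ef. rewrite S_INR. simpl (2 ^ S M).
    assert (2 ^ M <> 0) by (apply pow_nonzero; lra). field. auto.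
Qed.

Lemma Ef_ex : ex_series Ef.
Proof.
  assert (H : ex_finite_lim_seq (sum_n Ef)).
  { apply (ex_finite_lim_seq_incr _ 28).
    - intros n. rewrite sum_Sn. pose proof (Ef_nonneg (S n)). unfold plus; simpl. lra.
    - intros n. rewrite sum_n_Reals, Ef_sum.
      assert (0 <= (INR n ^ 3 + 6 * INR n ^ 2 + 18 * INR n + 27) / 2 ^ n).
      { apply Rmult_le_pos. pose proof (pos_INR n). nra.
        left. apply Rinv_0_lt_compat, pow_lt. lra. }
      lra. }
  destruct H as [l Hl]. exists l. exact Hl.
Qed.

Lemma Ef_lim : is_lim_seq Ef 0.
Proof. apply ex_series_lim_0, Ef_ex. Qed.

Lemma Ef_lim1 : is_lim_seq (fun n => Ef (S n)) 0.
Proof. apply (is_lim_seq_incr_1 Ef 0), Ef_lim. Qed.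

Lemma squeeze0 (f b : nat -> R) : (forall n, Rabs (f n) <= b n) -> is_lim_seq b 0 -> is_lim_seq f 0.
Proof.
  intros H Hb. apply is_lim_seq_abs_0.
  apply (is_lim_seq_le_le (fun _ => 0) _ b); auto.
  intros n; split; [apply Rabs_pos | apply H]. apply is_lim_seq_const.
Qed.

Lemma pow_bound (x : R) r : (r <= 3)%nat -> Rabs (x ^ r) <= Rabs x ^ 3 + 1.
Proof.
  intros Hr. rewrite <- RPow_abs. pose proof (Rabs_pos x). set (a := Rabs x) in *.
  destruct r as [|[|[|[|r]]]]; simpl; try lia; destruct (Rle_dec a 1); nra.
Qed.

Definition Tail (t : nat) : Prop :=
  exists C, 0 <= C /\ forall n : nat, delta (-(Z.of_nat n)) t <= C / 2 ^ n.

Lemma tail_all t : Tail t.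
Proof.
  induction t as [t IH] using lt_wf_ind.
  destruct t as [|[|t]].
  - exists 1. split. lra. intros n. rewrite delta_t0.
    assert (0 < 2 ^ n) by (apply pow_lt; lra).
    destruct (Z.eqb_spec (-(Z.of_nat n)) 0).
    + assert (n = 0%nat) by lia. subst. simpl. lra.
    + apply Rmult_le_pos. lra. left; apply Rinv_0_lt_compat; lra.
  - exists 1. split. lra. intros n.
    replace (-(Z.of_nat n))%Z with (1 - Z.of_nat (n+1))%Z by lia.
    rewrite delta_t1. rewrite !pow_add.
    assert (0 < 2 ^ n) by (apply pow_lt; lra).
    simpl. apply Rle_div_r. lra.  field_simplify. all: try lra.
  - destruct (Nat.Even_or_Odd (S (S t))) as [[u Hu]|[u Hu]]; rewrite Hu.
    + destruct (IH u ltac:(lia)) as [C [HC H]]. exists C. split; auto.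
      intros n. rewrite delta_even. apply H.
    + destruct (IH u ltac:(lia)) as [C1 [HC1 H1]].
      destruct (IH (u+1)%nat ltac:(lia)) as [C2 [HC2 H2]].
      exists (C1/4 + C2 + 1). split. lra.
      intros n. rewrite delta_odd.
      destruct n as [|n].
      * simpl. pose proof (H1 1%nat). simpl in H.
        pose proof (delta_bounds 1 (u+1)).
        replace (-(0) - 1)%Z with (-(Z.of_nat 1))%Z by reflexivity.
        replace (-(0) + 1)%Z with 1%Z by reflexivity. simpl. lra.
      * pose proof (H1 (S (S n))) as A1. pose proof (H2 n) as A2.
        replace (-(Z.of_nat (S n)) - 1)%Z with (-(Z.of_nat (S (S n))))%Z by lia.
        replace (-(Z.of_nat (S n)) + 1)%Z with (-(Z.of_nat n))%Z by lia.
        assert (0 < 2 ^ n) by (apply pow_lt; lra).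
        simpl in *. unfold Rdiv in *. rewrite !Rinv_mult in *.
        assert (0 <= C1 * (/2 * (/2 * /2^n))) by (apply Rmult_le_pos; [lra| ]; 
          left; apply Rmult_lt_0_compat; [lra| apply Rmult_lt_0_compat; [lra| apply Rinv_0_lt_compat; lra]]).
        assert (0 <= /2^n) by (left; apply Rinv_0_lt_compat; lra).
        nra.
Qed.
Definition gf (r t : nat) (j : Z) : R := delta j t * IZR j ^ r.

Lemma moment_Sym r t : moment r t = real (Lim_seq (Sym (gf r t))).
Proof. reflexivity. Qed.

Lemma IZR_nat k : IZR (Z.of_nat k) = INR k.
Proof. symmetry; apply INR_IZR_INZ. Qed.

Lemma pow2_pos n : 0 < 2 ^ n.
Proof. apply pow_lt; lra. Qed.

Lemma gf_neg_bound r t C k : (r <= 3)%nat -> 0 <= C ->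
  (forall n : nat, delta (-(Z.of_nat n)) t <= C / 2 ^ n) ->
  Rabs (gf r t (-(Z.of_nat k))%Z) <= C * Ef k.
Proof.
  intros Hr HC HT. unfold gf, Ef. rewrite Rabs_mult.
  pose proof (delta_bounds (-(Z.of_nat k)) t).
  rewrite (Rabs_right (delta _ _)) by lra.
  rewrite opp_IZR, IZR_nat.
  pose proof (pow_bound (- INR k) r Hr) as Hp.
  rewrite Rabs_Ropp, (Rabs_right (INR k)) in Hp by apply Rle_ge, pos_INR.
  specialize (HT k). pose proof (pow2_pos k).
  pose proof (pos_INR k).
  assert (0 <= INR k ^ 3) by (apply pow_le; auto).
  apply Rle_trans with (delta (- Z.of_nat k) t * (INR k ^ 3 + 1)).
  apply Rmult_le_compat_l; lra.
  replace (C * ((INR k ^ 3 + 1) / 2 ^ k)) with (C / 2 ^ k * (INR k ^ 3 + 1)) by (field; lra).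
  apply Rmult_le_compat_r; lra.
Qed.

Lemma gf_pos_bound r t k : (r <= 3)%nat ->
  Rabs (gf r t (Z.of_nat k)) <= 2 ^ t * Ef k.
Proof.
  intros Hr. unfold gf, Ef.
  destruct (le_lt_dec k t) as [Hk|Hk].
  - rewrite Rabs_mult.
    pose proof (delta_bounds (Z.of_nat k) t).
    rewrite (Rabs_right (delta _ _)) by lra.
    rewrite IZR_nat.
    pose proof (pow_bound (INR k) r Hr) as Hp.
    rewrite (Rabs_right (INR k)) in Hp by apply Rle_ge, pos_INR.
    pose proof (pow2_pos k). pose proof (pos_INR k).
    assert (0 <= INR k ^ 3) by (apply pow_le; auto).
    assert (2 ^ k <= 2 ^ t) by (apply Rle_pow; lra || lia).
    apply Rle_trans with (1 * (INR k ^ 3 + 1)).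
    apply Rmult_le_compat; try lra. apply Rabs_pos.
    replace (2 ^ t * ((INR k ^ 3 + 1) / 2 ^ k)) with (2 ^ t / 2 ^ k * (INR k ^ 3 + 1)) by (field; lra).
    apply Rmult_le_compat_r. lra. apply Rle_div_r. lra. lra.
  - rewrite delta_big by lia. rewrite Rmult_0_l, Rabs_R0.
    apply Rmult_le_pos. left; apply pow2_pos. apply Ef_nonneg.
Qed.

Lemma h_bound r t : (r <= 3)%nat -> exists B, forall n, Rabs (hfun (gf r t) n) <= B * Ef n.
Proof.
  intros Hr. destruct (tail_all t) as [C [HC HT]].
  exists (C + 2 ^ t). intros n. pose proof (Ef_nonneg n). pose proof (pow2_pos t).
  destruct n as [|n].
  - simpl hfun. pose proof (gf_pos_bound r t 0 Hr). simpl Z.of_nat in H1. nra.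
  - simpl hfun. replace (Z.of_nat n + 1)%Z with (Z.of_nat (S n)) by lia.
    pose proof (gf_pos_bound r t (S n) Hr). pose proof (gf_neg_bound r t C (S n) Hr HC HT).
    pose proof (Rabs_triang (gf r t (- Z.of_nat (S n))%Z) (gf r t (Z.of_nat (S n)))). nra.
Qed.

Lemma mom_lim r t : (r <= 3)%nat -> is_lim_seq (Sym (gf r t)) (moment r t).
Proof.
  intros Hr. destruct (h_bound r t Hr) as [B HB].
  assert (Hex : ex_series (hfun (gf r t))).
  { apply (@ex_series_le R_AbsRing R_CompleteNormedModule _ (fun n => B * Ef n)). exact HB.
    apply (ex_series_scal_l B Ef). apply Ef_ex. }
  pose proof (Series_correct _ Hex) as Hs.
  assert (Hl : is_lim_seq (Sym (gf r t)) (Series (hfun (gf r t)))).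
  { apply is_lim_seq_ext with (sum_n (hfun (gf r t))).
    intros M. rewrite sum_n_Reals, Sym_sum. reflexivity. exact Hs. }
  rewrite moment_Sym, (is_lim_seq_unique _ _ Hl). exact Hl.
Qed.
Lemma mom_even r u : moment r (2*u) = moment r u.
Proof.
  unfold moment. f_equal. apply Lim_seq_ext. intros M. apply sum_eq. intros i _.
  rewrite delta_even. reflexivity.
Qed.

Lemma mom_even_pow r i p : moment r (2^i * p) = moment r p.
Proof.
  induction i. simpl. f_equal. lia.
  replace (2 ^ S i * p)%nat with (2 * (2^i * p))%nat by (simpl; lia).
  rewrite mom_even. auto.
Qed.

Lemma dpow_bound d x y r : (r <= 3)%nat -> 0 <= d -> Rabs x <= y ->
  Rabs (d * x ^ r) <= d * (y ^ 3 + 1).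
Proof.
  intros Hr Hd Hxy. rewrite Rabs_mult, (Rabs_right d) by lra.
  apply Rmult_le_compat_l. auto.
  pose proof (pow_bound x r Hr). pose proof (Rabs_pos x).
  assert (Rabs x ^ 3 <= y ^ 3) by (apply pow_incr; lra). lra.
Qed.

Lemma lim_minus (u v : nat -> R) (a b : R) :
  is_lim_seq u a -> is_lim_seq v b -> is_lim_seq (fun n => u n - v n) (a - b).
Proof. intros. apply is_lim_seq_minus'; auto. Qed.

Lemma ev_zero (f : nat -> R) (N : nat) : (forall n, (N <= n)%nat -> f n = 0) -> is_lim_seq f 0.
Proof.
  intros H. apply is_lim_seq_ext_loc with (fun _ => 0). exists N. intros n Hn. rewrite H; auto.
  apply is_lim_seq_const.
Qed.

Lemma odd_lim r u (a b : R) : (r <= 3)%nat ->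
  is_lim_seq (Sym (fun j => delta j u * (IZR j + 1) ^ r)) a ->
  is_lim_seq (Sym (fun j => delta j (u+1) * (IZR j - 1) ^ r)) b ->
  moment r (2*u+1) = /2 * a + /2 * b.
Proof.
  intros Hr Ha Hb.
  set (F1 := fun j => delta j u * (IZR j + 1) ^ r) in *.
  set (F2 := fun j => delta j (u+1) * (IZR j - 1) ^ r) in *.
  apply (lim_uniq (Sym (gf r (2*u+1)))). apply mom_lim; auto.
  apply is_lim_seq_ext with (fun M => /2 * (Sym F1 M + F1 (-(Z.of_nat M + 1))%Z - F1 (Z.of_nat M))
                                   + /2 * (Sym F2 M - F2 (-(Z.of_nat M))%Z + F2 (Z.of_nat M + 1)%Z)).
  { intros M. rewrite <- Sym_shift_m1, <- Sym_shift_p1, <- !Sym_scal, <- Sym_plus.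
    apply Sym_ext. intros j. unfold gf, F1, F2. rewrite delta_odd.
    rewrite !minus_IZR, !plus_IZR. simpl (IZR 1).
    replace (IZR j - 1 + 1) with (IZR j) by ring.
    replace (IZR j + 1 - 1) with (IZR j) by ring. ring. }
  destruct (tail_all u) as [C1 [HC1 HT1]].
  destruct (tail_all (u+1)) as [C2 [HC2 HT2]].
  replace (/2 * a + /2 * b) with (/2 * (a + 0 - 0) + /2 * (b - 0 + 0)) by ring.
  apply is_lim_seq_plus'; apply lim_scal.
  - apply lim_minus. apply is_lim_seq_plus'. auto.
    + apply (squeeze0 _ (fun M => C1 * Ef M)).
      2:{ replace 0 with (C1 * 0) by ring. apply lim_scal, Ef_lim. }
      intros M. unfold F1.
      replace (-(Z.of_nat M + 1))%Z with (-(Z.of_nat (S M)))%Z by lia.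
      pose proof (delta_bounds (-(Z.of_nat (S M))) u).
      eapply Rle_trans. apply (dpow_bound _ _ (INR M)); auto. lra.
      { rewrite opp_IZR, IZR_nat, S_INR. replace (- (INR M + 1) + 1) with (- INR M) by ring.
        rewrite Rabs_Ropp, Rabs_right. lra. apply Rle_ge, pos_INR. }
      specialize (HT1 (S M)). simpl in HT1. pose proof (pow2_pos M).
      pose proof (pos_INR M). assert (0 <= INR M ^ 3) by (apply pow_le; auto).
      unfold Ef. apply Rle_trans with (C1 / 2 ^ M * (INR M ^ 3 + 1)).
      apply Rmult_le_compat_r. lra.
      apply Rle_trans with (C1 / (2 * 2 ^ M)). auto.
      apply Rmult_le_compat_l. lra. apply Rinv_le_contravar; lra.
      right. field. lra.
    + apply (ev_zero _ (S u)). intros n Hn. unfold F1. rewrite delta_big by lia. ring.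
  - apply is_lim_seq_plus'. apply lim_minus. auto.
    + apply (squeeze0 _ (fun M => (2 * C2) * Ef (S M))).
      2:{ replace 0 with ((2 * C2) * 0) by ring. apply lim_scal, Ef_lim1. }
      intros M. unfold F2.
      pose proof (delta_bounds (-(Z.of_nat M)) (u+1)).
      eapply Rle_trans. apply (dpow_bound _ _ (INR M + 1)); auto. lra.
      { rewrite opp_IZR, IZR_nat. replace (- INR M - 1) with (- (INR M + 1)) by ring.
        rewrite Rabs_Ropp, Rabs_right. lra. pose proof (pos_INR M). lra. }
      specialize (HT2 M). pose proof (pow2_pos M).
      pose proof (pos_INR M). assert (0 <= (INR M + 1) ^ 3) by (apply pow_le; lra).
      unfold Ef. rewrite S_INR. simpl (2 ^ S M).
      apply Rle_trans with (C2 / 2 ^ M * ((INR M + 1) ^ 3 + 1)).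
      apply Rmult_le_compat_r. lra. auto.
      right. field. lra.
    + apply (ev_zero _ (S u)). intros n Hn. unfold F2. rewrite delta_big by lia. ring.
Qed.
Lemma poly_lim t c0 c1 c2 c3 (P : Z -> R) :
  (forall j, P j = delta j t * (c0 + c1 * IZR j + c2 * IZR j ^ 2 + c3 * IZR j ^ 3)) ->
  is_lim_seq (Sym P) (c0 * moment 0 t + c1 * moment 1 t + c2 * moment 2 t + c3 * moment 3 t).
Proof.
  intros HP.
  apply is_lim_seq_ext with (fun M => c0 * Sym (gf 0 t) M + c1 * Sym (gf 1 t) M
                                   + c2 * Sym (gf 2 t) M + c3 * Sym (gf 3 t) M).
  { intros M. rewrite <- !Sym_scal, <- !Sym_plus. apply Sym_ext. intros j.
    rewrite HP. unfold gf. simpl. ring. }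
  repeat apply is_lim_seq_plus'; apply lim_scal; apply mom_lim; lia.
Qed.

Lemma rec0 u : moment 0 (2*u+1) = /2 * moment 0 u + /2 * moment 0 (u+1).
Proof.
  apply odd_lim. lia.
  - replace (moment 0 u) with (1 * moment 0 u + 0 * moment 1 u + 0 * moment 2 u + 0 * moment 3 u) by ring.
    apply poly_lim. intros j. simpl. ring.
  - replace (moment 0 (u+1)) with (1 * moment 0 (u+1) + 0 * moment 1 (u+1) + 0 * moment 2 (u+1) + 0 * moment 3 (u+1)) by ring.
    apply poly_lim. intros j. simpl. ring.
Qed.

Lemma rec1 u : moment 1 (2*u+1) = /2 * (moment 1 u + moment 0 u) + /2 * (moment 1 (u+1) - moment 0 (u+1)).
Proof.
  apply odd_lim. lia.
  - replace (moment 1 u + moment 0 u) with (1 * moment 0 u + 1 * moment 1 u + 0 * moment 2 u + 0 * moment 3 u) by ring.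
    apply poly_lim. intros j. simpl. ring.
  - replace (moment 1 (u+1) - moment 0 (u+1)) with ((-1) * moment 0 (u+1) + 1 * moment 1 (u+1) + 0 * moment 2 (u+1) + 0 * moment 3 (u+1)) by ring.
    apply poly_lim. intros j. simpl. ring.
Qed.

Lemma rec2 u : moment 2 (2*u+1) = /2 * (moment 2 u + 2 * moment 1 u + moment 0 u)
   + /2 * (moment 2 (u+1) - 2 * moment 1 (u+1) + moment 0 (u+1)).
Proof.
  apply odd_lim. lia.
  - replace (moment 2 u + 2 * moment 1 u + moment 0 u) with (1 * moment 0 u + 2 * moment 1 u + 1 * moment 2 u + 0 * moment 3 u) by ring.
    apply poly_lim. intros j. simpl. ring.
  - replace (moment 2 (u+1) - 2 * moment 1 (u+1) + moment 0 (u+1)) with (1 * moment 0 (u+1) + (-2) * moment 1 (u+1) + 1 * moment 2 (u+1) + 0 * moment 3 (u+1)) by ring.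
    apply poly_lim. intros j. simpl. ring.
Qed.

Lemma rec3 u : moment 3 (2*u+1) = /2 * (moment 3 u + 3 * moment 2 u + 3 * moment 1 u + moment 0 u)
   + /2 * (moment 3 (u+1) - 3 * moment 2 (u+1) + 3 * moment 1 (u+1) - moment 0 (u+1)).
Proof.
  apply odd_lim. lia.
  - replace (moment 3 u + 3 * moment 2 u + 3 * moment 1 u + moment 0 u) with (1 * moment 0 u + 3 * moment 1 u + 3 * moment 2 u + 1 * moment 3 u) by ring.
    apply poly_lim. intros j. simpl. ring.
  - replace (moment 3 (u+1) - 3 * moment 2 (u+1) + 3 * moment 1 (u+1) - moment 0 (u+1)) with ((-1) * moment 0 (u+1) + 3 * moment 1 (u+1) + (-3) * moment 2 (u+1) + 1 * moment 3 (u+1)) by ring.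
    apply poly_lim. intros j. simpl. ring.
Qed.

Lemma mom_t0 r : (r <= 3)%nat -> moment r 0 = 0 ^ r.
Proof.
  intros Hr. apply (lim_uniq (Sym (gf r 0))). apply mom_lim; auto.
  apply is_lim_seq_ext with (fun _ => 0 ^ r); [|apply is_lim_seq_const].
  intros M. induction M.
  - rewrite Sym_0. unfold gf. rewrite delta_t0. simpl. ring.
  - rewrite Sym_S, <- IHM. unfold gf. rewrite !delta_t0.
    destruct (Z.eqb_spec (-(Z.of_nat M + 1)) 0); [lia|].
    destruct (Z.eqb_spec (Z.of_nat M + 1) 0); [lia|]. ring.
Qed.

Lemma strong_ind (P : nat -> Prop) : P 0%nat -> P 1%nat ->
  (forall u, P u -> P (2*u)%nat) -> (forall u, (1 <= u)%nat -> P u -> P (u+1)%nat -> P (2*u+1)%nat) ->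
  forall t, P t.
Proof.
  intros H0 H1 He Ho t. induction t as [t IH] using lt_wf_ind.
  destruct t as [|[|t]]; auto.
  destruct (Nat.Even_or_Odd (S (S t))) as [[u Hu]|[u Hu]]; rewrite Hu.
  apply He, IH; lia. apply Ho. lia. apply IH; lia. apply IH; lia.
Qed.

Lemma M0_one t : moment 0 t = 1.
Proof.
  assert (H0 : moment 0 0 = 1) by (rewrite mom_t0 by lia; reflexivity).
  revert t. apply (strong_ind (fun t => moment 0 t = 1)); auto.
  - pose proof (rec0 0) as H. change (2*0+1)%nat with 1%nat in H. change (0+1)%nat with 1%nat in H. lra.
  - intros u Hu. rewrite mom_even. auto.
  - intros u _ H1 H2. rewrite rec0, H1, H2. field.
Qed.

Lemma M1_zero t : moment 1 t = 0.
Proof.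
  assert (H0 : moment 1 0 = 0) by (rewrite mom_t0 by lia; simpl; ring).
  revert t. apply (strong_ind (fun t => moment 1 t = 0)); auto.
  - pose proof (rec1 0) as H. change (2*0+1)%nat with 1%nat in H. change (0+1)%nat with 1%nat in H.
    rewrite !M0_one in H. lra.
  - intros u Hu. rewrite mom_even. auto.
  - intros u _ H1 H2. rewrite rec1, H1, H2, !M0_one. field.
Qed.

Definition Am (t : nat) := moment 2 t.
Definition Bm (t : nat) := moment 3 t.

Lemma D_eq t : D t = Am t - Bm t / 3.
Proof. unfold D, kappa2, kappa3, Am, Bm. rewrite M1_zero. field. Qed.

Lemma A_even u : Am (2*u) = Am u.
Proof. apply mom_even. Qed.

Lemma A_odd u : Am (2*u+1) = /2 * (Am u + Am (u+1)) + 1.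
Proof. unfold Am. rewrite rec2, !M1_zero, !M0_one. field. Qed.

Lemma B_odd u : Bm (2*u+1) = /2 * (Bm u + Bm (u+1)) + 3/2 * (Am u - Am (u+1)).
Proof. unfold Am, Bm. rewrite rec3, !M1_zero, !M0_one. field. Qed.

Lemma A0 : Am 0 = 0.
Proof. unfold Am. rewrite mom_t0 by lia. simpl. ring. Qed.

Lemma A1 : Am 1 = 2.
Proof.
  pose proof (A_odd 0) as H. change (2*0+1)%nat with 1%nat in H. change (0+1)%nat with 1%nat in H.
  rewrite A0 in H. lra.
Qed.

Lemma A_diff t : Am t - Am (t+1) <= 2.
Proof.
  induction t as [t IH] using lt_wf_ind.
  destruct (Nat.Even_or_Odd t) as [[u Hu]|[u Hu]]; subst t.
  - destruct u as [|u].
    + simpl. rewrite A0, A1. lra.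
    + replace (2 * S u + 1)%nat with (2 * S u + 1)%nat by lia.
      rewrite A_even, A_odd. pose proof (IH (S u) ltac:(lia)). lra.
  - replace (2 * u + 1 + 1)%nat with (2 * (u+1))%nat by lia.
    rewrite A_even, A_odd. pose proof (IH u ltac:(lia)). lra.
Qed.

Lemma D_even u : D (2*u) = D u.
Proof. unfold D, kappa2, kappa3. rewrite !mom_even. reflexivity. Qed.

Lemma D_odd u : D (2*u+1) = /2 * D u + /2 * D (u+1) + 1 - /2 * Am u + /2 * Am (u+1).
Proof. rewrite !D_eq, A_odd, B_odd. field. Qed.

Lemma D_pow i p : D (2^i * p) = D p.
Proof. unfold D, kappa2, kappa3. rewrite !mom_even_pow. reflexivity. Qed.

Lemma A_pow i p : Am (2^i * p) = Am p.
Proof. unfold Am. apply mom_even_pow. Qed.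
Definition xx (t i : nat) : nat := (2^(i+1) * t + 2^i - 1)%nat.

Lemma pow2_ge1 i : (1 <= 2 ^ i)%nat.
Proof. pose proof (Nat.pow_nonzero 2 i). lia. Qed.

Lemma xx_0 t : xx t 0 = (2 * t)%nat.
Proof. unfold xx. simpl. lia. Qed.

Lemma xx_S t i : xx t (S i) = (2 * xx t i + 1)%nat.
Proof.
  unfold xx. pose proof (pow2_ge1 i).
  replace (S i + 1)%nat with (S (i+1)) by lia. rewrite !Nat.pow_succ_r'.
  rewrite Nat.pow_add_r. simpl (2^1)%nat. nia.
Qed.

Lemma xx_plus1 t i : (xx t i + 1)%nat = (2^i * (2*t+1))%nat.
Proof.
  unfold xx. pose proof (pow2_ge1 i). rewrite Nat.pow_add_r. simpl (2^1)%nat. nia.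
Qed.

Lemma xx_claim t i :
  let beta := (Am t - Am (t+1)) / 2 - 3 in
  Am (xx t i) = Am (2*t+1) + 2 + beta / 2 ^ i /\
  D (xx t i) = D (2*t+1) + (D t - D (2*t+1) - INR i * beta) / 2 ^ i.
Proof.
  intros beta. induction i.
  - rewrite xx_0, A_even, D_even, A_odd. simpl. unfold beta. split; field.
  - destruct IHi as [IH1 IH2].
    assert (Hp1 : Am (xx t i + 1) = Am (2*t+1)) by (rewrite xx_plus1; apply A_pow).
    assert (Hp2 : D (xx t i + 1) = D (2*t+1)) by (rewrite xx_plus1; apply D_pow).
    pose proof (pow2_pos i).
    rewrite xx_S. split.
    + rewrite A_odd, Hp1, IH1. simpl. field. lra.
    + rewrite D_odd, Hp1, Hp2, IH1, IH2. rewrite S_INR. simpl. field. lra.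
Qed.

Lemma xx_bound t i : D (xx t i) >= Rmin (D t) (D (S t)) + 2 * INR i / 2 ^ i.
Proof.
  destruct (xx_claim t i) as [_ H]. rewrite H.
  set (beta := (Am t - Am (t+1)) / 2 - 3).
  pose proof (A_diff t) as Hd.
  assert (Hb : beta <= -2) by (unfold beta; lra).
  set (mu := Rmin (D t) (D (S t))).
  assert (H1 : mu <= D t) by apply Rmin_l.
  assert (H2 : mu <= D (t+1)) by (rewrite Nat.add_1_r; apply Rmin_r).
  assert (Hp : D (2*t+1) = /2 * D t + /2 * D (t+1) + 1 - /2 * Am t + /2 * Am (t+1)) by apply D_odd.
  assert (Hdp : D (2*t+1) - mu >= - beta - 2) by (unfold beta in *; lra).
  pose proof (pow2_pos i) as Hw.
  assert (Hw1 : 1 <= 2 ^ i) by (apply (pow_R1_Rle 2 i); lra).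
  set (w := / 2 ^ i).
  assert (Hw0 : 0 < w) by (apply Rinv_0_lt_compat; lra).
  assert (Hw2 : w <= 1) by (unfold w; rewrite <- Rinv_1; apply Rinv_le_contravar; lra).
  unfold Rdiv. fold w.
  pose proof (pos_INR i).
  assert (0 <= (1 - w) * (D (2*t+1) - mu)) by (apply Rmult_le_pos; lra).
  assert (0 <= w * (D t - mu)) by (apply Rmult_le_pos; lra).
  assert (0 <= (INR i * w) * (- beta - 2)) by (apply Rmult_le_pos; [apply Rmult_le_pos|]; lra).
  apply Rle_ge.
  replace (D (2 * t + 1) + (D t - D (2 * t + 1) - INR i * beta) * w)
    with (mu + 2 * INR i * w + ((1 - w) * (D (2*t+1) - mu) + w * (D t - mu) + (INR i * w) * (- beta - 2))) by ring.
  lra.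
Qed.

Theorem corollary2p12 (t k : nat) (hk : (1 <= k)%nat) :
  m (2 ^ (k + 2) * t + 2 ^ (k + 1) - 2)%nat >= m t + INR k / 2 ^ k.
Proof.
  assert (E1 : (2 ^ (k + 2) * t + 2 ^ (k + 1) - 2)%nat = (2 * xx t k)%nat).
  { unfold xx. pose proof (pow2_ge1 k).
    replace (k+2)%nat with (S (k+1)) by lia. rewrite Nat.pow_succ_r'.
    replace (k+1)%nat with (S k) by lia. rewrite Nat.pow_succ_r'. nia. }
  rewrite E1. unfold m. rewrite D_even.
  replace (S (2 * xx t k)) with (xx t (S k)) by (rewrite xx_S; lia).
  pose proof (xx_bound t k) as B1. pose proof (xx_bound t (S k)) as B2.
  pose proof (pow2_pos k). pose proof (pos_INR k).
  rewrite S_INR in B2. simpl (2 ^ S k) in B2.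
  replace (2 * (INR k + 1) / (2 * 2 ^ k)) with ((INR k + 1) / 2 ^ k) in B2 by (field; lra).
  assert (INR k / 2 ^ k <= 2 * INR k / 2 ^ k).
  { unfold Rdiv. apply Rmult_le_compat_r. left; apply Rinv_0_lt_compat; lra. lra. }
  assert (INR k / 2 ^ k <= (INR k + 1) / 2 ^ k).
  { unfold Rdiv. apply Rmult_le_compat_r. left; apply Rinv_0_lt_compat; lra. lra. }
  apply Rle_ge. apply Rmin_glb; lra.
Qed.
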